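(* Let $\mathcal N=(\mathcal L,\mathcal I,D_{\mathcal L})$ be a network (with a general collision profile) of character $D^*$. (i) If $S$ is a collision-free framed schedule of frame length $T_F\ge 3D^*+1$ whose rate vector $R_S$ exists, then $R_S\in(1-D^*/T_F)\,\widetilde{\mathcal R}^{(\mathcal L,\mathcal I)}$, and hence $R_S\in\widetilde{\mathcal R}^{(\mathcal L,\mathcal I)}$. (ii) For every $R\in\widetilde{\mathcal R}^{(\mathcal L,\mathcal I)}$ and every $\epsilon>0$ there exist a frame length $T_F$ and a collision-free framed schedule $S$ of frame length $T_F$ whose rate vector exists and satisfies $R_S(l)\ge R(l)-\epsilon$ for all $l$.
   Context: A network is a triple $\mathcal N=(\mathcal L,\mathcal I,D_{\mathcal L})$ where $\mathcal L$ is a finite nonempty set of links, each $\mathcal I(l)$ is a collection of nonempty subsets of $\mathcal L$, and $D_{\mathcal L}$ assigns an integer $D_{\mathcal L}(l,l')$ to every pair with $l'\in\phi$ for some $\phi\in\mathcal I(l)$. The character is $D^*=\max_{l}\max_{\phi\in\mathcal I(l)}\max_{l'\in\phi}|D_{\mathcal L}(l,l')|$ (0 if there are no collision sets). A schedule is a map $S:\mathcal L\times\mathbb Z\to\{0,1\}$; $S(l,t)$ has a collision if there is $\phi\in\mathcal I(l)$ with $S(l',t+D_{\mathcal L}(l,l'))=1$ for all $l'\in\phi$; $S$ is collision free if no $(l,t)$ with $S(l,t)=1$ has a collision. $R_S(l)=\lim_{T\to\infty}\frac1T\sum_{t=0}^{T-1}\iota\big(S(l,t)=1\text{ and collision free}\big)$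 when the limit exists; $R_S=(R_S(l))_l$ is the rate vector when all limits exist. For an integer $T_F\ge D^*+1$, a framed schedule of frame length $T_F$ is a schedule $S$ with $S(l,t)=0$ for $t<0$, such that for every $k\ge0$ and every $l$: $S(l,kT_F+i)=0$ for $i=T_F-D^*,\dots,T_F-1$, and the values $S(l,kT_F+i)$, $i=0,\dots,T_F-D^*-1$, are all equal. An independent set of $(\mathcal L,\mathcal I)$ is a subset $A\subseteq\mathcal L$ such that there are no $l\in A$ and $\phi\in\mathcal I(l)$ with $\phi\subseteq A$; $\widetilde{\mathcal R}^{(\mathcal L,\mathcal I)}$ is the convex hull of the indicator vectors (in $\mathbb R^{\mathcal L}$) of all independent sets of $(\mathcal L,\mathcal I)$. *)

(* Defs.v *)
From HB Require Import structures.
From mathcomp Require Import all_boot all_order all_algebra.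
From mathcomp Require Import all_classical all_reals all_analysis.
Set Implicit Arguments. Unset Strict Implicit. Unset Printing Implicit Defensive.
Import Order.TTheory GRing.Theory Num.Theory.
Import numFieldNormedType.Exports.
Local Open Scope classical_set_scope.
Local Open Scope ring_scope.

(* A network (L, I, D): links form the finite type L; I l is the collection of
   collision sets of l; D l l' is the integer delay (only meaningful when
   l' belongs to some collision set of l). *)

Definition character (L : finType) (I : L -> {set {set L}}) (D : L -> L -> int) : nat :=
  (\max_(l : L) \max_(phi in I l) \max_(l' in phi) `|D l l'|)%N.

Definition has_collision (L : finType) (I : L -> {set {set L}}) (D : L -> L -> int)
  (S : L -> int -> bool) (l : L) (t : int) : Prop :=
  exists2 phi, phi \in I l & forall l', l' \in phi -> S l' (t + D l l') = true.

Definition collision_free (L : finType) (I : L -> {set {set L}}) (D : L -> L -> int)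
  (S : L -> int -> bool) : Prop :=
  forall l t, S l t = true -> ~ has_collision I D S l t.

Definition success (L : finType) (I : L -> {set {set L}}) (D : L -> L -> int)
  (S : L -> int -> bool) (l : L) (t : int) : bool :=
  S l t && ~~ `[< has_collision I D S l t >].

Definition is_rate_vector (R : realType) (L : finType) (I : L -> {set {set L}})
  (D : L -> L -> int) (S : L -> int -> bool) (r : L -> R) : Prop :=
  forall l, (fun T : nat => T%:R^-1 * \sum_(t < T) (success I D S l (Posz t))%:R)
              @ \oo --> r l.

Definition framed (L : finType) (I : L -> {set {set L}}) (D : L -> L -> int)
  (TF : nat) (S : L -> int -> bool) : Prop :=
  let Ds := character I D in
  [/\ (Ds.+1 <= TF)%N,
      (forall l (t : int), t < 0 -> S l t = false),
      (forall l (k i : nat), (TF - Ds <= i < TF)%N -> S l (Posz (k * TF + i)) = false) &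
      (forall l (k i j : nat), (i < TF - Ds)%N -> (j < TF - Ds)%N ->
          S l (Posz (k * TF + i)) = S l (Posz (k * TF + j)))].

Definition independent (L : finType) (I : L -> {set {set L}}) (A : {set L}) : bool :=
  [forall l in A, forall phi in I l, ~~ (phi \subset A)].

Definition indep_hull (R : realType) (L : finType) (I : L -> {set {set L}})
  : set (L -> R) :=
  [set r | exists w : {set L} -> R,
     [/\ forall A, 0 <= w A,
         forall A, ~~ independent I A -> w A = 0,
         \sum_(A : {set L}) w A = 1 &
         forall l, r l = \sum_(A : {set L}) w A * (l \in A)%:R]].

(* Main.v *)
Require Import Defs.
From HB Require Import structures.
From mathcomp Require Import all_boot all_order all_algebra.
From mathcomp Require Import all_classical all_reals all_analysis.
From mathcomp Require Import ring lra zify.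
Import Order.TTheory GRing.Theory Num.Theory.
Import numFieldNormedType.Exports.
Local Open Scope classical_set_scope.
Local Open Scope ring_scope.

Lemma sub_cvg (R : realType) (u : nat -> R) (a : R) (g : nat -> nat) :
  (forall n, (n <= g n)%N) -> u @ \oo --> a -> (u \o g) @ \oo --> a.
Proof.
move=> gn ua P /ua [N _ HN]; exists N => // n /= Hn; apply: HN => /=.
exact: leq_trans Hn (gn n).
Qed.

Lemma bw1 (R : realType) (u : nat -> R) :
  (forall n, `|u n| <= 1) -> exists2 g : nat -> nat, (forall n, (n <= g n)%N) & cvgn (u \o g).
Proof.
move=> ub; have [|f finc fc] := bolzano_weierstrass (u_ := u).
  rewrite /bounded_near; near=> M => n _ /=; apply: le_trans (ub n) _.
  near: M; apply: nbhs_pinfty_ge; done.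
exists f => //.
have fS n : (f n < f n.+1)%N.
  rewrite ltnNge; apply/negP => h; have := finc n.+1 n; rewrite /Order.le /= h ltnn.
  by [].
elim=> [|n IH] //; exact: leq_ltn_trans IH (fS n).
Unshelve. all: by end_near.
Qed.

Lemma bwmulti (R : realType) (J : finType) (u : J -> nat -> R) :
  (forall j n, `|u j n| <= 1) ->
  exists2 g : nat -> nat, (forall n, (n <= g n)%N) &
    exists W : J -> R, forall j, (u j \o g) @ \oo --> W j.
Proof.
move=> ub.
suff H : forall s : seq J, exists2 g : nat -> nat, (forall n, (n <= g n)%N) &
    forall j, j \in s -> cvgn (u j \o g).
  have [g gn gc] := H (enum J); exists g => //.
  exists (fun j => limn (u j \o g)) => j; apply: gc; by rewrite mem_enum.
elim=> [|j0 s [g gn gc]]; first by exists id.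
have [h hn hc] := @bw1 R (u j0 \o g) (fun n => ub j0 (g n)).
exists (g \o h) => [n|j]; first exact: leq_trans (hn n) (gn _).
rewrite inE => /predU1P [->|js]; first exact: hc.
have := gc j js => /cvg_ex [a ua]; apply/cvg_ex; exists a.
exact: (@sub_cvg R (u j \o g) a h hn ua).
Qed.

Lemma sum_period (b : nat -> bool) (P q : nat) : (forall t, b (t + P)%N = b t) ->
  (\sum_(0 <= t < q * P) b t = q * \sum_(0 <= t < P) b t)%N.
Proof.
move=> bP; elim: q => [|q IH]; first by rewrite mul0n big_geq.
rewrite mulSn addnC (big_cat_nat (n := q * P)) ?leq_addr // IH /=.
rewrite -{1}[(q * P)%N]add0n big_addn addKn addnC; congr (_ + _)%N.
apply: eq_bigr => t _; elim: q {IH} => [|q IH]; first by rewrite addn0.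
by rewrite mulSn addnCA addnC bP IH.
Qed.

Lemma sum_split (b : nat -> bool) (P T : nat) : (forall t, b (t + P)%N = b t) ->
  (\sum_(0 <= t < T) b t = (T %/ P) * \sum_(0 <= t < P) b t + \sum_(0 <= t < T %% P) b t)%N.
Proof.
move=> bP; rewrite {1}(divn_eq T P) (big_cat_nat (n := (T %/ P * P)%N)) ?leq_addr //.
rewrite sum_period //; congr (_ + _)%N.
rewrite -{1}[(T %/ P * P)%N]add0n big_addn addKn; apply: eq_bigr => t _.
elim: (T %/ P)%N => [|q IH]; first by rewrite mul0n addn0.
by rewrite mulSn addnCA -IH addnC bP.
Qed.

Lemma sum_le (b : nat -> bool) n : (\sum_(0 <= t < n) b t <= n)%N.
Proof.
elim: n => [|n IH]; first by rewrite big_geq.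
rewrite big_nat_recr //=; case: (b n); lia.
Qed.
Lemma periodic_cvg (R : realType) (b : nat -> bool) (P : nat) : (0 < P)%N ->
  (forall t, b (t + P)%N = b t) ->
  (fun T : nat => T%:R^-1 * \sum_(t < T) (b t)%:R) @ \oo -->
    ((\sum_(0 <= t < P) b t)%N%:R / P%:R : R).
Proof.
move=> P0 bP; apply/cvgrPdist_le => eps eps0.
pose N := (Num.Def.archi_bound (P%:R / eps)).+1.
exists N => // T /= HT.
have T0 : (0 < T)%N by apply: leq_trans HT.
rewrite -natr_sum -(big_mkord xpredT (fun t => (b t : nat))) (sum_split _ P T bP).
set s := (\sum_(0 <= t < P) b t)%N.
set e := (\sum_(0 <= t < T %% P) b t)%N.
have sP : (s <= P)%N by apply: sum_le.
have eP : (e <= P)%N by apply: leq_trans (sum_le _ _) (ltnW (ltn_pmod _ P0)).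
have Teq : T%:R = (T %/ P)%:R * P%:R + (T %% P)%:R :> R by rewrite -natrM -natrD -divn_eq.
have Pr : 0 < P%:R :> R by rewrite ltr0n.
have Tr : 0 < T%:R :> R by rewrite ltr0n.

have -> : s%:R / P%:R - T%:R^-1 * ((T %/ P) * s + e)%N%:R =
   ((s * (T %% P))%N%:R - (P * e)%N%:R) / (P%:R * T%:R) :> R.
  rewrite natrD !natrM Teq; field.
  by rewrite -Teq (gt_eqF Tr) (gt_eqF Pr).
have h1 : `|((s * (T %% P))%N%:R - (P * e)%N%:R : R)| <= P%:R * P%:R.
  have a1 : ((s * (T %% P))%N <= P * P)%N.
    by apply: leq_mul => //; apply: ltnW; apply: ltn_pmod.
  have a2 : ((P * e) <= P * P)%N by apply: leq_mul.
  rewrite -natrM; move: a1 a2; rewrite -!(ler_nat R) => a1 a2.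
  have b1 := ler0n R (s * (T %% P))%N; have b2 := ler0n R (P * e)%N.
  rewrite ler_norml; apply/andP; split; lra.
have h2 : P%:R <= eps * T%:R.
  have := archi_boundP (ltW (divr_gt0 Pr eps0)); rewrite -/N.
  move=> h; have : P%:R / eps < T%:R.
    apply: lt_le_trans h _; rewrite ler_nat; exact: ltnW.
  by rewrite ltr_pdivrMr // mulrC => /ltW.
rewrite normrM normfV (gtr0_norm (mulr_gt0 Pr Tr)) ler_pdivrMr ?mulr_gt0 //.
nra.
Qed.
Lemma charD (L : finType) (I : L -> {set {set L}}) (D : L -> L -> int) l phi l' :
  phi \in I l -> l' \in phi -> (`|D l l'| <= character I D)%N.
Proof.
move=> pI l'p; rewrite /character.
apply: leq_trans (leq_bigmax_cond _ (erefl true : xpredT l)).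
apply: leq_trans (leq_bigmax_cond _ pI).
exact: (leq_bigmax_cond _ l'p).
Qed.
Lemma intt (a b : nat) (d : int) : (`|d| <= b)%N -> Posz (a + b) + d = Posz (a + absz (b%:Z + d)).
Proof. move=> h; lia. Qed.
Lemma frame_sum (L : finType) (I : L -> {set {set L}}) (D : L -> L -> int) TF S l K :
  framed I D TF S ->
  (\sum_(0 <= t < K * TF) S l (Posz t) =
   (TF - character I D) * \sum_(0 <= k < K) S l (Posz (k * TF)))%N.
Proof.
case=> h1 hneg hidle hconst; set Ds := character I D.
elim: K => [|K IH]; first by rewrite mul0n !big_geq ?muln0.
rewrite mulSnr (big_cat_nat (n := (K * TF)%N)) ?leq_addr // IH /=.
rewrite -{1}[(K * TF)%N]add0n big_addn addKn.
rewrite (big_cat_nat (m := 0) (n := (TF - Ds)%N) (p := TF)) ?leq_subr //=.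


rewrite (@eq_big_nat _ _ _ 0 (TF - Ds) _ (fun=> nat_of_bool (S l (Posz (K * TF))))); last first.
  by move=> i /andP[_ hi]; rewrite addnC (hconst l K i 0) ?addn0 //; lia.
rewrite (@eq_big_nat _ _ _ (TF - Ds) TF _ (fun=> 0%N)); last first.
  by move=> i hi; rewrite addnC hidle.
rewrite !sum_nat_const_nat muln0 addn0 subn0 big_nat_recr //= mulnDr.
done.
Qed.
Lemma lim_uniq (R : realType) (u : nat -> R) (a b : R) : u @ \oo --> a -> u @ \oo --> b -> a = b.
Proof. move=> ha hb; exact: (cvg_unique _ ha hb). Qed.

Lemma cvg_sumR (R : realType) (J : finType) (f : J -> nat -> R) (a : J -> R) :
  (forall j, f j @ \oo --> a j) -> (fun n => \sum_j f j n) @ \oo --> \sum_j a j.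
Proof. move=> h; apply: cvg_big => //; exact: add_continuous. Qed.

Lemma cvg_ge0 (R : realType) (u : nat -> R) (a : R) : (forall n, 0 <= u n) -> u @ \oo --> a -> 0 <= a.
Proof.
move=> h ua; have := @closed_cvg nat R \oo _ u [set x | 0 <= x] (@closed_ge _ 0).
apply=> //; exists 0%N => // n _; exact: h.
Qed.
Arguments lim_uniq {R u a b}.
Arguments cvg_sumR {R J f a}.
Arguments cvg_ge0 {R u a}.
Arguments sub_cvg {R u a g}.
Arguments charD {L I} D {l phi l'}.

Lemma set0_indep (L : finType) (I : L -> {set {set L}}) : independent I finset.set0.
Proof. by apply/forallP => l; rewrite inE. Qed.

Lemma hull_scale (R : realType) (L : finType) (I : L -> {set {set L}}) (x : L -> R) (c : R) :
  @indep_hull R L I x -> 0 <= c <= 1 -> @indep_hull R L I (fun l => c * x l).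
Proof.
move=> [w [w0 wi w1 wx]] /andP[c0 c1].
exists (fun A => c * w A + (1 - c) * (A == finset.set0)%:R); split.
- by move=> A; apply: addr_ge0; apply: mulr_ge0 => //; lra.
- move=> A hA; rewrite wi // mulr0 add0r.
  case: eqP => [eA|]; last by rewrite mulr0.
  by move: hA; rewrite eA set0_indep.
- rewrite big_split /= -mulr_sumr w1 -mulr_sumr (bigD1 finset.set0) //= eqxx big1 ?addr0.
    by rewrite !mulr1; lra.
  by move=> A /negbTE ->.
- move=> l; rewrite wx mulr_sumr; apply: eq_bigr => A _.
  rewrite mulrDl mulrA; case: eqP => [->|]; last by rewrite mulr0 mul0r addr0.
  by rewrite finset.in_set0 !mulr0 addr0.
Qed.

Lemma part1 (R : realType) (L : finType) (I : L -> {set {set L}}) (D : L -> L -> int)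
  (TF : nat) (S : L -> int -> bool) (r : L -> R) :
  (3 * character I D + 1 <= TF)%N -> framed I D TF S -> collision_free I D S ->
  is_rate_vector I D S r ->
  exists2 x, @indep_hull R L I x & forall l, r l = (1 - (character I D)%:R / TF%:R) * x l.
Proof.
move=> hTF fr cf rv.
have [h1 hneg hidle hconst] := fr.
set Ds := character I D in hTF h1 hidle hconst *.
pose A (k : nat) : {set L} := finset.finset (fun l => S l (Posz (k * TF))).
have cst l k i : (i < TF - Ds)%N -> S l (Posz (k * TF + i)) = (l \in A k).
  by move=> hi; rewrite inE (hconst l k i 0) ?addn0 //; lia.
have indA k : independent I (A k).
  apply/forallP => l; apply/implyP => lA; apply/forallP => phi; apply/implyP => phiI.
  apply/negP => /fintype.subsetP sub.
  apply: (cf l (Posz (k * TF + Ds))); first by rewrite cst //; lia.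
  exists phi => // l' l'p.
  have hd := charD D phiI l'p.
  rewrite (intt _ _ _ hd) cst; [exact: sub | lia].
have succ l t : success I D S l t = S l t.
  rewrite /success; case E: (S l t) => //=.
  by rewrite asboolF //; exact: cf l t E.
pose w (n : nat) (B : {set L}) : R := (n.+1)%:R^-1 * \sum_(k < n.+1) ((A k == B) : nat)%:R.
have wb B n : `|w n B| <= 1.
  rewrite /w ger0_norm; last by apply: mulr_ge0 => //; apply: sumr_ge0.
  rewrite ler_pdivrMl ?ltr0n // mulr1 -natr_sum ler_nat.
  rewrite -(big_mkord xpredT (fun k => nat_of_bool (A k == B))); exact: sum_le.
have [g gn [W Wc]] := @bwmulti R _ (fun B n => w n B) (fun j n => wb j n).
have wl n l : \sum_B w n B * (l \in B)%:R =
    (n.+1)%:R^-1 * \sum_(k < n.+1) ((l \in A k) : nat)%:R.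
  under eq_bigr do rewrite /w -mulrA.
  rewrite -mulr_sumr; congr (_ * _).
  under eq_bigr do rewrite mulr_suml.
  rewrite exchange_big /=; apply: eq_bigr => k _.
  rewrite (bigD1 (A k)) //= eqxx mul1r big1 ?addr0 //.
  by move=> B /negbTE; rewrite eq_sym => ->; rewrite mul0r.
have wsum n : \sum_B w n B = 1.
  rewrite /w -mulr_sumr exchange_big /=.
  rewrite (eq_bigr (fun=> 1)); last first.
    by move=> k _; rewrite (bigD1 (A k)) //= eqxx big1 ?addr0 // => B /negbTE; rewrite eq_sym => ->.
  by rewrite sumr_const card_ord mulVf ?pnatr_eq0.
exists (fun l => \sum_B W B * (l \in B)%:R).
  exists W; split => //.
  - move=> B; apply: (cvg_ge0 _ (Wc B)) => n /=.
    by apply: mulr_ge0 => //; apply: sumr_ge0.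
  - move=> B hB; apply: lim_uniq (Wc B) _.
    have -> : (fun n => w n B) \o g = fun=> 0.
      apply/funext => n /=; rewrite /w big1 ?mulr0 // => k _.
      by case: eqP => // eB; move: hB; rewrite -eB indA.
    exact: cvg_cst.
  - apply: lim_uniq (cvg_sumR Wc) _.
    have -> : (fun n => \sum_j ((fun B n => w n B) j \o g) n) = fun=> 1.
      by apply/funext => n /=; rewrite wsum.
    exact: cvg_cst.
move=> l.
pose rs := fun T : nat => T%:R^-1 * \sum_(t < T) (success I D S l (Posz t))%:R : R.
have rl : rs @ \oo --> r l := rv l.
pose T' n := ((g n).+1 * TF)%N.
have hT' n : (n <= T' n)%N.
  have := gn n; rewrite /T'; nia.
have h2 := sub_cvg hT' rl.
have E m : rs (m.+1 * TF)%N = (1 - Ds%:R / TF%:R) * \sum_B w m B * (l \in B)%:R.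
  rewrite wl /rs.
  under eq_bigr do rewrite succ.
  rewrite -natr_sum -(big_mkord xpredT (fun t => nat_of_bool (S l (Posz t)))).
  rewrite (frame_sum L I D TF S l m.+1 fr).
  rewrite big_mkord (eq_bigr (fun k : 'I_m.+1 => nat_of_bool (l \in A k))); last first.
    by move=> k _; rewrite inE.

  rewrite !natrM natr_sum -/Ds natrB; last exact: ltnW.
  set s := \sum_(k < m.+1) _.
  have TF0 : TF%:R != 0 :> R by rewrite pnatr_eq0; lia.
  field; by rewrite TF0 andbT addrC natr1 pnatr_eq0.
apply: (lim_uniq h2).
have -> : rs \o T' = fun n => (1 - Ds%:R / TF%:R) * \sum_B w (g n) B * (l \in B)%:R.
  by apply/funext => n /=; rewrite E.
apply: cvgM; first exact: cvg_cst.
apply: (cvg_sumR (f := fun B n => w (g n) B * (l \in B)%:R)) => B.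
apply: cvgM; [exact: Wc | exact: cvg_cst].
Qed.

Lemma sum_nseq (T : Type) (F : T -> nat) m A : (\sum_(i <- nseq m A) F i = m * F A)%N.
Proof. by elim: m => [|m IH]; rewrite ?big_nil // big_cons IH mulSn. Qed.

Lemma sum_flat (T : finType) (n : T -> nat) (F : T -> nat) :
  (\sum_(i <- flatten [seq nseq (n A) A | A <- enum T]) F i = \sum_A n A * F A)%N.
Proof.
rewrite big_flatten big_map big_enum /=; apply: eq_bigr => A _; exact: sum_nseq.
Qed.

Lemma count_nth (T : Type) (x0 : T) (F : T -> nat) (s : seq T) N :
  F x0 = 0%N -> (size s <= N)%N ->
  (\sum_(0 <= k < N) F (nth x0 s k) = \sum_(A <- s) F A)%N.
Proof.
move=> F0 sN; rewrite (big_nth x0) (big_cat_nat (n := size s)) //=.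
rewrite [X in (_ + X)%N](@eq_big_nat _ _ _ (size s) N _ (fun=> 0%N)).
  by rewrite sum_nat_const_nat muln0 addn0.
by move=> i /andP[hi _]; rewrite nth_default.
Qed.
Lemma final_ineq (R : realType) (X Y a k n e : R) : 0 < n -> 0 <= a -> a <= n -> 0 <= k ->
  X <= 1 -> n * X - k <= Y -> a + k <= e * n -> X - e <= (n - a) * Y / (n * n).
Proof.
move=> n0 a0 an k0 X1 hY he.
rewrite ler_pdivlMr ?mulr_gt0 //.
have h1 : 0 <= (n - a) * (Y - (n * X - k)) by apply: mulr_ge0; lra.
have h2 : 0 <= a * n * (1 - X) by apply: mulr_ge0; [apply: mulr_ge0; lra | lra].
have h3 : 0 <= a * k by apply: mulr_ge0.
have h4 : 0 <= n * (e * n - (a + k)) by apply: mulr_ge0; lra.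
nra.
Qed.

Lemma part2 (R : realType) (L : finType) (I : L -> {set {set L}}) (D : L -> L -> int)
  (x : L -> R) (eps : R) : @indep_hull R L I x -> 0 < eps ->
  exists (TF : nat) (S : L -> int -> bool) (r : L -> R),
    [/\ framed I D TF S, collision_free I D S, is_rate_vector I D S r &
        forall l, x l - eps <= r l].
Proof.
move=> [w [w0 wi w1 wx]] eps0.
set Ds := character I D.
set K := #|{set L}|.
pose M := Num.Def.archi_bound ((Ds + K)%:R / eps).
have hM : (Ds + K)%:R / eps < M%:R :> R.
  by apply: archi_boundP; apply: divr_ge0 => //; exact: ltW.
pose N := (M + Ds).+1.
have N0 : (0 < N)%N by [].
pose n (A : {set L}) := Num.Def.trunc (N%:R * w A).
have nle A : (n A)%:R <= N%:R * w A.
  by rewrite truncn_le mulr_ge0.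
have ngt A : N%:R * w A < (n A).+1%:R.
  by have /andP[] := truncn_itv (mulr_ge0 (ler0n R N) (w0 A)).
have n0 A : ~~ independent I A -> n A = 0%N.
  by move=> hA; rewrite /n wi // mulr0 truncn0.
pose s := flatten [seq nseq (n A) A | A <- enum {set L}].
have ssize : (size s <= N)%N.
  rewrite -(ler_nat R) -sum1_size (sum_flat _ n (fun=> 1%N)).
  rewrite natr_sum; apply: (le_trans (y := \sum_A N%:R * w A)).
    by apply: ler_sum => A _; rewrite muln1.
  by rewrite -mulr_sumr w1 mulr1.
have sind A : A \in s -> independent I A.
  move=> /flattenP [s' /mapP [A' _ ->]]; rewrite mem_nseq => /andP[h /eqP ->].
  by apply/negP => /negP /n0 e; move: h; rewrite e.
pose B (k : nat) := nth finset.set0 s (k %% N).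
have Bind k : independent I (B k).
  rewrite /B; case: (ltnP (k %% N) (size s)) => h.
    by apply: sind; apply: mem_nth.
  by rewrite nth_default // set0_indep.
pose S (l : L) (z : int) : bool :=
  match z with Posz t => ((t %% N)%N < N - Ds)%N && (l \in B (t %/ N)%N) | Negz _ => false end.
have Sk l k i : (i < N)%N -> S l (Posz (k * N + i)) = (i < N - Ds)%N && (l \in B k).
  move=> hi /=; rewrite modnMDl modn_small // divnMDl // divn_small // addn0 //.
have fr : framed I D N S.
  split.
  - rewrite /N; lia.
  - by move=> l [t|t] //.
  - by move=> l k i /andP[h1 h2]; rewrite Sk // ltnNge h1.
  - move=> l k i j hi hj; rewrite !Sk ?hi ?hj //; lia.
have cf : collision_free I D S.
  move=> l t St [phi phiI hall].
  case: t St hall => [t|t] //= St hall.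
  move/andP: St => [ht lB].
  have : phi \subset B (t %/ N)%N.
    apply/fintype.subsetP => l' l'p.
    have hd := charD D phiI l'p.
    have := hall l' l'p.
    case E: (Posz t + D l l') => [t'|t'] //= /andP[ht' l'B].
    suff -> : (t %/ N = t' %/ N)%N by [].
    have dt := divn_eq t N; have dt' := divn_eq t' N.
    have hq1 : (t %/ N < t' %/ N)%N -> (t %/ N * N + N <= t' %/ N * N)%N.
      by move=> h; rewrite addnC -mulSn leq_mul2r h orbT.
    have hq2 : (t' %/ N < t %/ N)%N -> (t' %/ N * N + N <= t %/ N * N)%N.
      by move=> h; rewrite addnC -mulSn leq_mul2r h orbT.
    lia.
  move=> hsub; move: (Bind (t %/ N)%N) => /forallP /(_ l) /implyP /(_ lB).
  by move=> /forallP /(_ phi) /implyP /(_ phiI); rewrite hsub.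
have succ l t : success I D S l t = S l t.
  rewrite /success; case E: (S l t) => //=.
  by rewrite asboolF //; exact: cf l t E.
have Sper l t : S l (Posz (t + N * N)) = S l (Posz t).
  by rewrite /= addnC modnMDl divnMDl // /B modnDl.
pose cnt l := (\sum_(0 <= t < N * N) S l (Posz t))%N.
exists N, S, (fun l => (cnt l)%:R / (N * N)%:R); split => //.
  move=> l.
  have NN : (0 < N * N)%N by rewrite muln_gt0 N0.
  have := @periodic_cvg R (fun t => success I D S l (Posz t)) (N * N) NN.
  rewrite /cnt; under eq_bigr do rewrite succ; apply.
  by move=> t; rewrite !succ Sper.
move=> l.
have ecnt : cnt l = ((N - Ds) * \sum_A n A * (l \in A))%N.
  rewrite /cnt (frame_sum L I D N S l N fr); congr (_ * _)%N.
  rewrite (@eq_big_nat _ _ _ 0 N _ (fun k => nat_of_bool (l \in nth finset.set0 s k))); last first.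
    move=> k /andP[_ hk]; have := Sk l k 0 N0; rewrite addn0 => ->.
    have DsN : (Ds < N)%N by rewrite /N; lia.
    by rewrite subn_gt0 DsN /B modn_small.
  rewrite (count_nth _ finset.set0 (fun A => nat_of_bool (l \in A))) //; last by rewrite finset.in_set0.
  exact: sum_flat.
rewrite ecnt natrM natrB; last by rewrite /N; lia.
rewrite (natrM _ N N); apply: (@final_ineq R _ _ _ K%:R).
- by rewrite ltr0n.
- exact: ler0n.
- by rewrite ler_nat; rewrite /N; lia.
- exact: ler0n.
- rewrite wx; apply: (le_trans (y := \sum_A w A)); last by rewrite w1.
  apply: ler_sum => A _; rewrite -[leRHS]mulr1; apply: ler_wpM2l => //.
  by case: (l \in A); rewrite ?ler01 ?lexx.
- rewrite natr_sum wx mulr_sumr (_ : K%:R = \sum_(A : {set L}) (1 : R)); last first.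
    by rewrite sumr_const.
  rewrite -sumrB; apply: ler_sum => A _; rewrite natrM.
  have := ngt A; rewrite -natr1 => h.
  by case: (l \in A) => /=; rewrite ?mulr1 ?mulr0; lra.
- rewrite -natrD; move: hM; rewrite ltr_pdivrMr // => h; apply: ltW.
  apply: (lt_le_trans h); rewrite mulrC; apply: ler_wpM2l; first exact: ltW.
  by rewrite ler_nat /N; lia.
Qed.

Theorem theorem3 (R : realType) (L : finType) (I : L -> {set {set L}})
  (D : L -> L -> int)
  (L_nonempty : (0 < #|L|)%N)
  (I_nonempty : forall l phi, phi \in I l -> (0 < #|phi|)%N) :
  (forall (TF : nat) (S : L -> int -> bool) (r : L -> R),
     (3 * character I D + 1 <= TF)%N ->
     framed I D TF S -> collision_free I D S -> is_rate_vector I D S r ->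
     (exists2 x, @indep_hull R L I x &
        forall l, r l = (1 - (character I D)%:R / TF%:R) * x l)
     /\ @indep_hull R L I r)
  /\
  (forall (x : L -> R) (eps : R), @indep_hull R L I x -> 0 < eps ->
     exists (TF : nat) (S : L -> int -> bool) (r : L -> R),
       [/\ framed I D TF S, collision_free I D S, is_rate_vector I D S r &
           forall l, x l - eps <= r l]).
Proof.
split; last by move=> x eps; exact: part2.
move=> TF S r hTF fr cf rv.
have [x hx er] := part1 R L I D TF S r hTF fr cf rv.
split; first by exists x.
have -> : r = fun l => (1 - (character I D)%:R / TF%:R) * x l by apply/funext => l; rewrite er.
apply: hull_scale => //.
have TF0 : (0 < TF)%N by lia.
have DT : ((character I D) <= TF)%N by lia.
rewrite subr_ge0 lerBlDr lerDl divr_ge0 ?ler0n // andbT.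
by rewrite ler_pdivrMr ?ltr0n // mul1r ler_nat.
Qed.
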